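(* Let $A_1,\dots,A_n$ be unital algebras, $A=A_1\oplus\cdots\oplus A_n$, and $0\ne c=(c_1,\dots,c_n)\in A$. For each $i$ let $S_i\subseteq A_i$ be such that, whenever $c_i\ne0$, $c_i$ has a generalized factorization (inside $A_i$) through zero products in $S_i$. Regard each $A_i$ as a subalgebra of $A$. Then: (1) for each $i$, $c$ has a generalized factorization (inside $A$) through every pair $(x,y)$ with $x,y\in S_i$ and $xy=0$; (2) if $n\ge2$, $i\ne j$, $x\in S_i$, $y\in S_j$, and there exist a non-zero $z\in S_i$ with $xz=0$ and a non-zero $w\in S_j$ with $wy=0$, then either $c$ has a generalized factorization through $(x,y)$, or there exist $x',x''\in A_i$ and $y',y''\in A_j$ with $x=x'+x''$, $y=y'+y''$ such that $c$ factorizes through each of $(x',y')$, $(x',y'')$, $(x'',y')$, $(x'',y'')$.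
   Context: Let $B$ be an algebra, $c\in B$, and $x,y\in B$ with $xy=0$. $c$ factorizes through $(x,y)$ if there exist $a,b\in B$ with $ay=0$, $xb=0$ and $ab=c$. $c$ has a generalized factorization through $(x,y)$ if either (i) there exist $x',x''\in B$ with $x=x'+x''$ such that $c$ factorizes through both $(x',y)$ and $(x'',y)$, or (ii) there exist $y',y''\in B$ with $y=y'+y''$ such that $c$ factorizes through both $(x,y')$ and $(x,y'')$. For $S\subseteq B$, $c$ has a generalized factorization through zero products in $S$ if it has a generalized factorization through every $(x,y)$ with $x,y\in S$ and $xy=0$. *)

(* Defs.v *)
From HB Require Import structures.
From mathcomp Require Import all_boot all_order all_algebra.
Set Implicit Arguments. Unset Strict Implicit. Unset Printing Implicit Defensive.
Import GRing.Theory.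
Local Open Scope ring_scope.

(* Factorization notions, stated for an abstract carrier with an addition,
   a multiplication and a zero (so they apply both to a ring A_i and to the
   direct sum A = A_1 (+) ... (+) A_n with pointwise operations). *)
Section Factorization.
Variables (T : Type) (add mul : T -> T -> T) (zero : T).

Definition factorizes (c x y : T) : Prop :=
  exists a b, mul a y = zero /\ mul x b = zero /\ mul a b = c.

Definition gen_factorizes (c x y : T) : Prop :=
  (exists x' x'', x = add x' x'' /\ factorizes c x' y /\ factorizes c x'' y) \/
  (exists y' y'', y = add y' y'' /\ factorizes c x y' /\ factorizes c x y'').

Definition gen_factorizes_zp (c : T) (S : T -> Prop) : Prop :=
  forall x y, S x -> S y -> mul x y = zero -> gen_factorizes c x y.
End Factorization.

Definition rfactorizes (R : pzRingType) := @factorizes R *%R 0.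
Definition rgen_factorizes (R : pzRingType) := @gen_factorizes R +%R *%R 0.
Definition rgen_factorizes_zp (R : pzRingType) := @gen_factorizes_zp R +%R *%R 0.

Section DirectSum.
Variables (n : nat) (A : 'I_n -> pzRingType).

Definition dsum : Type := forall i : 'I_n, A i.
Definition dsum_add (u v : dsum) : dsum := fun i => u i + v i.
Definition dsum_mul (u v : dsum) : dsum := fun i => u i * v i.
Definition dsum_zero : dsum := fun i => 0.

Definition dsum_inj (i : 'I_n) (x : A i) : dsum :=
  fun j => match i =P j with
           | ReflectT e => ecast k (A k) e x
           | ReflectF _ => 0
           end.

Definition dfactorizes := @factorizes dsum dsum_mul dsum_zero.
Definition dgen_factorizes := @gen_factorizes dsum dsum_add dsum_mul dsum_zero.
End DirectSum.

(* Main.v *)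
Require Import Defs.
From HB Require Import structures.
From mathcomp Require Import all_boot all_order all_algebra.
From Stdlib Require Import FunctionalExtensionality.
Import GRing.Theory.
Local Open Scope ring_scope.

Section Helpers.
Variables (n : nat) (A : 'I_n -> pzRingType).

Definition upd (f : dsum A) (i : 'I_n) (t : A i) : dsum A :=
  fun l => match i =P l with
           | ReflectT e => ecast k (A k) e t
           | ReflectF _ => f l
           end.

Lemma upd_eq f i t : upd f i t i = t.
Proof.
rewrite /upd; case: (i =P i) => [e|//].
by rewrite (eq_irrelevance e erefl).
Qed.

Lemma upd_ne f i t l : i != l -> upd f i t l = f l.
Proof. move=> ne; rewrite /upd; case: (i =P l) => [e|//]; by rewrite e eqxx in ne. Qed.

Lemma inj_eq i (x : A i) : dsum_inj x i = x.
Proof.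
rewrite /dsum_inj; case: (i =P i) => [e|//].
by rewrite (eq_irrelevance e erefl).
Qed.

Lemma inj_ne i (x : A i) l : i != l -> dsum_inj x l = 0.
Proof. move=> ne; rewrite /dsum_inj; case: (i =P l) => [e|//]; by rewrite e eqxx in ne. Qed.

Definition one : dsum A := fun l => 1.

Lemma inj_add i (x y : A i) :
  dsum_inj (x + y) = dsum_add (dsum_inj x) (dsum_inj y).
Proof.
apply: functional_extensionality_dep => l; rewrite /dsum_add.
case: (eqVneq i l) => [<-|ne]; first by rewrite !inj_eq.
by rewrite !inj_ne // addr0.
Qed.

Lemma lift_same (c : dsum A) i (u v : A i) :
  rfactorizes (c i) u v -> dfactorizes c (dsum_inj u) (dsum_inj v).
Proof.
case=> [a [b [h1 [h2 h3]]]].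
exists (upd c i a), (upd one i b); split; [|split];
apply: functional_extensionality_dep => l; rewrite /dsum_mul /dsum_zero;
case: (eqVneq i l) => [<-|ne].
- by rewrite upd_eq inj_eq.
- by rewrite inj_ne // mulr0.
- by rewrite upd_eq inj_eq.
- by rewrite inj_ne // mul0r.
- by rewrite !upd_eq.
- by rewrite !upd_ne // /one mulr1.
Qed.

Lemma lift_cross (c : dsum A) i j (u : A i) (v : A j) : i != j ->
  (exists a b, u * b = 0 /\ a * b = c i) ->
  (exists a b, a * v = 0 /\ a * b = c j) ->
  dfactorizes c (dsum_inj u) (dsum_inj v).
Proof.
move=> nij; have nji : j != i by rewrite eq_sym.
move=> [ai [bi [hi1 hi2]]] [aj [bj [hj1 hj2]]].
exists (upd (upd c j aj) i ai), (upd (upd one j bj) i bi); split; [|split];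
apply: functional_extensionality_dep => l; rewrite /dsum_mul /dsum_zero;
case: (eqVneq i l) => [<-|ne].
- by rewrite inj_ne // mulr0.
- case: (eqVneq j l) => [<-|ne2]; first by rewrite upd_ne // upd_eq inj_eq.
  by rewrite inj_ne // mulr0.
- by rewrite upd_eq inj_eq.
- by rewrite inj_ne // mul0r.
- by rewrite !upd_eq.
- rewrite [upd (upd c _ _) _ _ _]upd_ne // [upd (upd one _ _) _ _ _]upd_ne //.
  case: (eqVneq j l) => [<-|ne2]; first by rewrite !upd_eq.
  by rewrite !upd_ne // /one mulr1.
Qed.

End Helpers.

Theorem mainTheorem7 (n : nat) (A : 'I_n -> pzRingType)
  (c : dsum A) (S : forall i : 'I_n, A i -> Prop) :
  c <> dsum_zero A ->
  (forall i : 'I_n, c i <> 0 -> rgen_factorizes_zp (c i) (S i)) ->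
  (* (1) *)
  (forall (i : 'I_n) (x y : A i), S i x -> S i y -> x * y = 0 ->
     dgen_factorizes c (dsum_inj x) (dsum_inj y)) /\
  (* (2) *)
  ((2 <= n)%N ->
  forall (i j : 'I_n) (x : A i) (y : A j), i != j -> S i x -> S j y ->
    (exists z : A i, z <> 0 /\ S i z /\ x * z = 0) ->
    (exists w : A j, w <> 0 /\ S j w /\ w * y = 0) ->
    dgen_factorizes c (dsum_inj x) (dsum_inj y) \/
    (exists (x' x'' : A i) (y' y'' : A j),
       x = x' + x'' /\ y = y' + y'' /\
       dfactorizes c (dsum_inj x') (dsum_inj y') /\
       dfactorizes c (dsum_inj x') (dsum_inj y'') /\
       dfactorizes c (dsum_inj x'') (dsum_inj y') /\
       dfactorizes c (dsum_inj x'') (dsum_inj y''))).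
Proof.
move=> _ H; split.
  move=> i x y Sx Sy xy.
  have G : rgen_factorizes (c i) x y.
    have [c0|cn0] := eqVneq (c i) 0; last by apply: (H i) => //; apply/eqP.
    left; exists x, 0; rewrite addr0; split=> //; rewrite c0.
    by split; exists 0, 0; rewrite /= ?mul0r ?mulr0.
  case: G => [[x' [x'' [-> [f1 f2]]]]|[y' [y'' [-> [f1 f2]]]]].
    by left; exists (dsum_inj x'), (dsum_inj x''); rewrite inj_add;
       split=> //; split; apply: lift_same.
  by right; exists (dsum_inj y'), (dsum_inj y''); rewrite inj_add;
     split=> //; split; apply: lift_same.
move=> _ i j x y nij Sx Sy [z [_ [Sz xz]]] [w [_ [Sw wy]]].
right.
have Pi : exists x' x'', x = x' + x'' /\
   (exists a b, x' * b = 0 /\ a * b = c i) /\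
   (exists a b, x'' * b = 0 /\ a * b = c i).
  have P0 : exists a b, (0 : A i) * b = 0 /\ a * b = c i.
    by exists (c i), 1; rewrite mul0r mulr1.
  have [c0|cn0] := eqVneq (c i) 0.
    exists x, 0; rewrite addr0; split=> //; split=> //.
    by exists 0, 0; rewrite c0 !mulr0.
  have := H i (elimN eqP cn0) x z Sx Sz xz.
  case=> [[x' [x'' [-> [[a [b [_ [h1 h2]]]] [a' [b' [_ [h1' h2']]]]]]]]
        |[z' [z'' [_ [[a [b [_ [h1 h2]]]] _]]]]].
    by exists x', x''; split=> //; split; [exists a, b|exists a', b'].
  by exists x, 0; rewrite addr0; split=> //; split=> //; exists a, b.
have Qj : exists y' y'', y = y' + y'' /\
   (exists a b, a * y' = 0 /\ a * b = c j) /\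
   (exists a b, a * y'' = 0 /\ a * b = c j).
  have Q0 : exists a b, a * (0 : A j) = 0 /\ a * b = c j.
    by exists (c j), 1; rewrite mulr0 mulr1.
  have [c0|cn0] := eqVneq (c j) 0.
    exists y, 0; rewrite addr0; split=> //; split=> //.
    by exists 0, 0; rewrite c0 !mul0r.
  have := H j (elimN eqP cn0) w y Sw Sy wy.
  case=> [[w' [w'' [_ [[a [b [h1 [_ h2]]]] _]]]]
        |[y' [y'' [-> [[a [b [h1 [_ h2]]]] [a' [b' [h1' [_ h2']]]]]]]]].
    by exists y, 0; rewrite addr0; split=> //; split=> //; exists a, b.
  by exists y', y''; split=> //; split; [exists a, b|exists a', b'].
case: Pi => [x' [x'' [ex [p1 p2]]]]; case: Qj => [y' [y'' [ey [q1 q2]]]].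
exists x', x'', y', y''; do !split=> //; exact: lift_cross.
Qed.
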